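(* Let $N,t,r,K$ be integers with $t,r\ge1$, $m=t+r<N$, $K\ge N$, and let $n_0=K-(N-t)+1$. For $s\ge0$ and $(x,y)\in(0,1]^2$ define $$f(x,y;s)=f_\beta(x;n_0,r,0)\,f_\beta(y;K-(N-t)+r+1,N-t-r,0)\,e^{-s xy}\sum_{k=0}^{n_0}\binom{n_0}{k}\frac{(r-1)!}{(r+k-1)!}[s\,y(1-x)]^k$$ (the joint pdf of the maximal invariant $(p_1,p_2)$ under $H_1$ when $\mathrm{SINR}=s$; the pdf under $H_0$ is $f(x,y;0)$). Then the locally most powerful invariant detector statistic $$t_{\mathrm{LMPID}}=\frac{\left.\frac{\partial f(p_1,p_2;s)}{\partial s}\right|_{s=0}}{f(p_1,p_2;0)}$$ equals $$t_{\mathrm{LMPID}}=\frac{K-(N-t)+1}{r}\,p_2(1-p_1)-p_1p_2,$$ so that the LMPID is the decision rule comparing this quantity with a threshold $\eta$ (deciding $H_1$ when it exceeds $\eta$).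
   Context: $f_\beta(x;n,m,0)=\frac{(n+m-1)!}{(n-1)!(m-1)!}x^{n-1}(1-x)^{m-1}$ is the complex central beta pdf. Here $p_1=1/\bigl(1+\frac{m_1}{1+m_2}\bigr)$, $p_2=1/(1+m_2)$ with $m_1=\mathbf{z}_{2.3}^\dagger\mathbf{S}_{2.3}^{-1}\mathbf{z}_{2.3}$, $m_2=\mathbf{z}_3^\dagger\mathbf{S}_{33}^{-1}\mathbf{z}_3$, where $\mathbf{z}\in\mathbb{C}^N$ is partitioned into blocks $\mathbf{z}_1,\mathbf{z}_2,\mathbf{z}_3$ of sizes $t,r,N-m$, $\mathbf{S}$ (a Hermitian positive definite sample matrix) is partitioned conformably, $\mathbf{z}_{2.3}=\mathbf{z}_2-\mathbf{S}_{23}\mathbf{S}_{33}^{-1}\mathbf{z}_3$ and $\mathbf{S}_{2.3}=\mathbf{S}_{22}-\mathbf{S}_{23}\mathbf{S}_{33}^{-1}\mathbf{S}_{32}$; all that matters for the claim is that $(p_1,p_2)\in(0,1]^2$. *)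

(* Defs.v *)
From HB Require Import structures.
From mathcomp Require Import all_boot all_order all_algebra.
From mathcomp Require Import all_classical all_reals all_analysis.
Set Implicit Arguments. Unset Strict Implicit. Unset Printing Implicit Defensive.
Import Order.TTheory GRing.Theory Num.Theory.
Local Open Scope ring_scope.

(* complex central beta pdf:
   f_beta(x;n,m,0) = (n+m-1)!/((n-1)!(m-1)!) x^(n-1) (1-x)^(m-1) *)
Definition fbeta {R : realType} (n m : nat) (x : R) : R :=
  ((n + m - 1)`!)%:R / (((n - 1)`!) * ((m - 1)`!))%:R
  * x ^+ (n - 1) * (1 - x) ^+ (m - 1).

Definition fjoint {R : realType} (N t r K : nat) (x y s : R) : R :=
  let n0 := (K - (N - t) + 1)%N in
  fbeta n0 r x * fbeta (K - (N - t) + r + 1) (N - t - r) y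
  * expR (- (s * x * y))
  * \sum_(k < n0.+1)
      ('C(n0, k))%:R * (((r - 1)`!)%:R / ((r + k - 1)`!)%:R)
      * (s * y * (1 - x)) ^+ k.

(* Main.v *)
Require Import Defs.
From HB Require Import structures.
From mathcomp Require Import all_boot all_order all_algebra.
From mathcomp Require Import all_classical all_reals all_analysis.
From mathcomp Require Import ring.
Import Order.TTheory GRing.Theory Num.Theory.
Local Open Scope ring_scope.

Theorem proposition3 (R : realType) (N t r K : nat)
  (ht : (1 <= t)%N) (hr : (1 <= r)%N) (hm : (t + r < N)%N) (hK : (N <= K)%N)
  (x y : R) (hx : 0 < x <= 1) (hy : 0 < y <= 1)
  (hf0 : fjoint N t r K x y 0 != 0) :
  derivable (fun s : R => fjoint N t r K x y s) 0 1 /\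
  derive1 (fun s : R => fjoint N t r K x y s) 0 / fjoint N t r K x y 0
  = (K - (N - t) + 1)%N%:R / r%:R * y * (1 - x) - x * y.
Proof.
set n0 := (K - (N - t) + 1)%N.
set C := fbeta n0 r x * fbeta (K - (N - t) + r + 1) (N - t - r) y.
set c := fun k : nat => ('C(n0, k))%:R * (((r - 1)`!)%:R / ((r + k - 1)`!)%:R) : R.
set b := y * (1 - x).
pose p : {poly R} := \poly_(k < n0.+1) (c k * b ^+ k).
pose q : {poly R} := (- (x * y))%:P * 'X.
have Fe : (fun s : R => fjoint N t r K x y s) =
   cst C * ((expR \o horner q) * horner p).
  apply/funext => s; rewrite /fjoint -/n0 -/C !fctE /p /q horner_poly !hornerE.
  congr (_ * _ * _); first by rewrite mulNr [x * y * s]mulrC mulrA.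
  by apply: eq_bigr => k _; rewrite /c /b !exprMn; ring.
have c0 : c 0%N = 1.
  rewrite /c bin0 addn0 mul1r; apply: divff; by rewrite pnatr_eq0 -lt0n fact_gt0.
have c1 : c 1%N = n0%:R / r%:R.
  have hf : (r`! = r * (r-1)`!)%N by move: hr; case: (r) => // r0 _; rewrite factS subn1.
  rewrite /c bin1 addn1 /= (_ : (r.+1 - 1 = r)%N); last by rewrite subn1.
  rewrite hf natrM; field.
  by rewrite !pnatr_eq0 -!lt0n fact_gt0 hr.
have p0 : p.[0] = 1 by rewrite horner_coef0 coef_poly /= c0 mulr1.
have dp0 : p^`().[0] = n0%:R / r%:R * b.
  rewrite horner_coef0 coef_deriv coef_poly /= ifT; last by rewrite /n0 addn1.
  by rewrite c1 expr1 mulr1n.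
have q0 : q.[0] = 0.
  by rewrite !hornerE.
have dq0 : q^`().[0] = - (x * y).
  by rewrite derivM derivC derivX !hornerE.
have HD : is_derive (0:R) 1 (fun s : R => fjoint N t r K x y s)
   (C * (n0%:R / r%:R * b - x * y)).
  rewrite Fe; apply: is_derive_eq.
  by rewrite /= q0 p0 dp0 expR0 dq0 scaler0 addr0 !scale1r mul1r.
have F0 : fjoint N t r K x y 0 = C.
  have := congr1 (fun f : R -> R => f 0) Fe => /= ->.
  by rewrite !fctE q0 p0 expR0 !mulr1.
split; first by case: HD.
rewrite derive1E derive_val F0.
have C0 : C != 0 by rewrite -F0.
rewrite /b; field.
by rewrite C0 pnatr_eq0 -lt0n hr.
Qed.
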